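(* Let $(q,E)$ be an annotated CQ for which there exists a CQ $q'$ that fits $E$ with $q\subseteq q'$. Then there is, up to equivalence, exactly one $\preceq^{\mathrm{cod}}$-generalization for $(q,E)$.
   Context: An annotated CQ $(q,E)$ consists of a $k$-ary conjunctive query $q$ (relational atoms, no constants, every answer variable occurring in an atom) and a collection $E=(E^+,E^-)$ of labeled data examples of arity $k$, where a data example is $(I,\mathbf a)$ with $I$ a finite instance and $\mathbf a$ a $k$-tuple of its values. $[\![q]\!]$ is the set of data examples $(I,\mathbf a)$ with $\mathbf a\in q(I)$; $q$ fits $E$ if $E^+\subseteq[\![q]\!]$ and $E^-\cap[\![q]\!]=\emptyset$; $\subseteq$ is query containment and $\equiv$ equivalence. $q_1\preceq^{\mathrm{cod}}_q q_2$ iff $[\![q]\!]\oplus[\![q_1]\!]\subseteq[\![q]\!]\oplus[\![q_2]\!]$ ($\oplus$ = symmetric difference), $\prec_q$ its strict part. A $\preceq^{\mathrm{cod}}$-generalization for $(q,E)$ is a CQ $q'$ fitting $E$ with $q\subseteq q'$ such that no CQ $q''$ fitting $E$ with $q\subseteq q''$ has $q''\prec^{\mathrm{cod}}_q q'$. Candidate queries range over CQs using only the relation symbols occurring in $q$ and $E$. *)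

(* Defs.v *)
From mathcomp Require Import all_boot.
Set Implicit Arguments. Unset Strict Implicit. Unset Printing Implicit Defensive.

(* Variables and values are natural numbers; a relation symbol is a pair
   (name, arity).  An atom / fact is a name together with an argument list;
   its relation symbol is (name, length of the list). *)
Definition atom := (nat * seq nat)%type.
Definition fact := (nat * seq nat)%type.
Definition symbol := (nat * nat)%type.
Definition sym_of (a : atom) : symbol := (a.1, size a.2).

(* A CQ: answer-variable tuple and a finite list of relational atoms
   (all terms are variables: no constants). *)
Record CQ := mkCQ { ans : seq nat; body : seq atom }.

Definition wf_cq (k : nat) (q : CQ) : Prop :=
  size (ans q) = k /\
  forall x, x \in ans q -> exists2 a, a \in body q & x \in a.2.

Definition instance := seq fact.
Definition adom (I : instance) : seq nat := flatten (map snd I).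

Definition example := (instance * seq nat)%type.
Definition inst (e : example) : instance := e.1.
Definition tup (e : example) : seq nat := e.2.

Definition wf_ex (k : nat) (e : example) : Prop :=
  size (tup e) = k /\ forall v, v \in tup e -> v \in adom (inst e).

Definition answer (q : CQ) (I : instance) (a : seq nat) : Prop :=
  exists h : nat -> nat,
    (forall t, t \in body q -> (t.1, map h t.2) \in I) /\ map h (ans q) = a.

Definition den (q : CQ) (e : example) : Prop := answer q (inst e) (tup e).

Definition labeled := (seq example * seq example)%type.
Definition pos (E : labeled) : seq example := E.1.
Definition neg (E : labeled) : seq example := E.2.

Definition wf_labeled (k : nat) (E : labeled) : Prop :=
  (forall e, e \in pos E -> wf_ex k e) /\ (forall e, e \in neg E -> wf_ex k e).

Definition fits (q : CQ) (E : labeled) : Prop :=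
  (forall e, e \in pos E -> den q e) /\ (forall e, e \in neg E -> ~ den q e).

Definition contained (q1 q2 : CQ) : Prop :=
  forall (I : instance) (a : seq nat), answer q1 I a -> answer q2 I a.
Definition equivq (q1 q2 : CQ) : Prop := contained q1 q2 /\ contained q2 q1.

Definition symdiff (k : nat) (q q1 : CQ) (e : example) : Prop :=
  wf_ex k e /\ ~ (den q e <-> den q1 e).

Definition cod_le (k : nat) (q q1 q2 : CQ) : Prop :=
  forall e, symdiff k q q1 e -> symdiff k q q2 e.
Definition cod_lt (k : nat) (q q1 q2 : CQ) : Prop :=
  cod_le k q q1 q2 /\ ~ cod_le k q q2 q1.

Definition syms (q : CQ) (E : labeled) : seq symbol :=
  map sym_of (body q) ++
  flatten (map (fun e => map sym_of (inst e)) (pos E ++ neg E)).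

Definition candidate (k : nat) (q : CQ) (E : labeled) (q' : CQ) : Prop :=
  wf_cq k q' /\ forall a, a \in body q' -> sym_of a \in syms q E.

Definition cod_generalization (k : nat) (q : CQ) (E : labeled) (q' : CQ) : Prop :=
  candidate k q E q' /\ fits q' E /\ contained q q' /\
  ~ (exists q'', candidate k q E q'' /\ fits q'' E /\ contained q q'' /\
                 cod_lt k q q'' q').

(* Main.v *)
Require Import Defs.
From mathcomp Require Import all_boot.
From Stdlib Require Import Classical.
Set Implicit Arguments. Unset Strict Implicit.

Definition pr (x v : nat) : nat := pickle ((x, v) : nat * nat).
Definition p1 (n : nat) : nat := odflt 0 (omap fst (@pickle_inv (nat * nat)%type n)).
Definition p2 (n : nat) : nat := odflt 0 (omap snd (@pickle_inv (nat * nat)%type n)).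
Lemma p1K x v : p1 (pr x v) = x. Proof. by rewrite /p1 /pr pickleK_inv. Qed.
Lemma p2K x v : p2 (pr x v) = v. Proof. by rewrite /p2 /pr pickleK_inv. Qed.

Definition zpr (xs vs : seq nat) : seq nat := [seq pr xv.1 xv.2 | xv <- zip xs vs].

Definition bprod (q : CQ) (e : example) : CQ :=
  mkCQ (zpr (ans q) (tup e))
       (flatten (map (fun t => [seq (t.1, zpr t.2 f.2) |
            f <- [seq f <- inst e | (f.1 == t.1) && (size f.2 == size t.2)]]) (body q))).

Lemma zpr_p1 (h : nat -> nat) xs vs : size xs = size vs -> map (fun z => h (p1 z)) (zpr xs vs) = map h xs.
Proof.
elim: xs vs => [|x xs IH] [|v vs] //= [Hs]. by rewrite p1K IH.
Qed.
Lemma zpr_p2 (h : nat -> nat) xs vs : size xs = size vs -> map (fun z => h (p2 z)) (zpr xs vs) = map h vs.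
Proof.
elim: xs vs => [|x xs IH] [|v vs] //= [Hs]. by rewrite p2K IH.
Qed.
Lemma zpr_map (h1 h2 : nat -> nat) ys : map (fun y => pr (h1 y) (h2 y)) ys = zpr (map h1 ys) (map h2 ys).
Proof. by elim: ys => //= y ys ->. Qed.
Lemma size_zpr xs vs : size xs = size vs -> size (zpr xs vs) = size xs.
Proof. by move=> H; rewrite size_map size_zip H minnn. Qed.

Lemma mem_bprod q e t : t \in body (bprod q e) <->
  exists2 t0, t0 \in body q & exists2 f, f \in inst e /\ f.1 = t0.1 /\ size f.2 = size t0.2 &
     t = (t0.1, zpr t0.2 f.2).
Proof.
split.
- move/flatten_mapP=> [t0 Ht0 /mapP [f]]; rewrite mem_filter => /andP [/andP [/eqP H1 /eqP H2] Hf] ->.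
  by exists t0 => //; exists f.
- move=> [t0 Ht0 [f [Hf [H1 H2]] ->]]. apply/flatten_mapP; exists t0 => //.
  apply/mapP; exists f => //. by rewrite mem_filter H1 H2 !eqxx.
Qed.

Lemma bprod_size q e k : size (ans q) = k -> size (tup e) = k -> size (ans (bprod q e)) = k.
Proof. by move=> H1 H2; rewrite /= size_zpr // H1 H2. Qed.

Lemma bprod_contained q e : size (ans q) = size (tup e) -> contained q (bprod q e).
Proof.
move=> Hs I a [h [Hb Ha]]. exists (fun z => h (p1 z)); split.
- move=> t /mem_bprod [t0 Ht0 [f [Hf [H1 H2]] ->]] /=. by rewrite zpr_p1 // Hb.
- by rewrite zpr_p1.
Qed.

Lemma bprod_den q e : size (ans q) = size (tup e) -> den (bprod q e) e.
Proof.
move=> Hs. exists (fun z => p2 z); split.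
- move=> t /mem_bprod [t0 Ht0 [f [Hf [H1 H2]] ->]] /=. rewrite (zpr_p2 id) //.
  by rewrite map_id -H1 -surjective_pairing.
- by rewrite (zpr_p2 id) // map_id.
Qed.

Lemma hom_comp q1 q2 I a : answer q1 (body q2) (ans q2) -> answer q2 I a -> answer q1 I a.
Proof.
move=> [h1 [Hb1 Ha1]] [h2 [Hb2 Ha2]]. exists (fun y => h2 (h1 y)); split.
- move=> t Ht. have := Hb2 _ (Hb1 _ Ht). by rewrite /= -map_comp.
- by rewrite map_comp Ha1.
Qed.

Lemma canon q : answer q (body q) (ans q).
Proof. exists id; split; last by rewrite map_id. by move=> t Ht; rewrite map_id -surjective_pairing. Qed.

Lemma bprod_univ q e q' : size (ans q) = size (tup e) ->
  contained q q' -> den q' e -> contained (bprod q e) q'.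
Proof.
move=> Hs Hc [h2 [Hb2 Ha2]] I a. apply: hom_comp.
have [h1 [Hb1 Ha1]] := Hc _ _ (canon q).
exists (fun y => pr (h1 y) (h2 y)); split.
- move=> t Ht. rewrite zpr_map. apply/mem_bprod. exists (t.1, map h1 t.2); first exact: Hb1.
  exists (t.1, map h2 t.2) => //. split; first exact: Hb2. by rewrite /= !size_map.
- by rewrite zpr_map Ha1 Ha2.
Qed.
Fixpoint prodE (q : CQ) (es : seq example) : CQ :=
  if es is e :: es' then prodE (bprod q e) es' else q.

Lemma prodE_size q es k : size (ans q) = k -> (forall e, e \in es -> size (tup e) = k) ->
  size (ans (prodE q es)) = k.
Proof.
elim: es q => //= e es IH q Hq He. apply: IH.
  apply: bprod_size => //. by apply: He; rewrite inE eqxx.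
by move=> e' H; apply: He; rewrite inE H orbT.
Qed.

Lemma contained_trans a b c : contained a b -> contained b c -> contained a c.
Proof. by move=> H1 H2 I x /H1 /H2. Qed.

Lemma prodE_contained q es k : size (ans q) = k -> (forall e, e \in es -> size (tup e) = k) ->
  contained q (prodE q es).
Proof.
elim: es q => [|e es IH] q Hq He /=; first by move=> I a.
have He1 : size (tup e) = k by apply: He; rewrite inE eqxx.
have Hb : contained q (bprod q e) by apply: bprod_contained; rewrite Hq He1.
apply: (contained_trans Hb). apply: IH; first exact: bprod_size.
by move=> e' H; apply: He; rewrite inE H orbT.
Qed.

Lemma prodE_den q es k : size (ans q) = k -> (forall e, e \in es -> size (tup e) = k) ->
  forall e, e \in es -> den (prodE q es) e.
Proof.
elim: es q => [|e es IH] q Hq He //= e'.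
have He1 : size (tup e) = k by apply: He; rewrite inE eqxx.
have He' : forall e, e \in es -> size (tup e) = k by move=> e0 H; apply: He; rewrite inE H orbT.
rewrite inE => /orP [/eqP ->|H].
- apply: (prodE_contained (k:=k)) => //; first exact: bprod_size.
  apply: bprod_den. by rewrite Hq He1.
- apply: IH => //. exact: bprod_size.
Qed.

Lemma prodE_univ q es k q' : size (ans q) = k -> (forall e, e \in es -> size (tup e) = k) ->
  contained q q' -> (forall e, e \in es -> den q' e) -> contained (prodE q es) q'.
Proof.
elim: es q => [|e es IH] q Hq He Hc Hd //=.
have He1 : size (tup e) = k by apply: He; rewrite inE eqxx.
apply: IH.
- exact: bprod_size.
- by move=> e0 H; apply: He; rewrite inE H orbT.
- apply: bprod_univ => //; first by rewrite Hq He1. by apply: Hd; rewrite inE eqxx.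
- by move=> e0 H; apply: Hd; rewrite inE H orbT.
Qed.

Lemma sym_bprod q e t : t \in body (bprod q e) -> exists2 t0, t0 \in body q & sym_of t = sym_of t0.
Proof.
move/mem_bprod=> [t0 Ht0 [f [Hf [H1 H2]] ->]]; exists t0 => //.
by rewrite /sym_of /= size_zpr.
Qed.

Lemma sym_prodE q es t : t \in body (prodE q es) -> exists2 t0, t0 \in body q & sym_of t = sym_of t0.
Proof.
elim: es q => [|e es IH] q /=; first by exists t.
move/IH=> [t1 /sym_bprod [t0 H0 E0] E1]. exists t0 => //. by rewrite E1.
Qed.

Lemma answer_wf k q I a : wf_cq k q -> answer q I a -> wf_ex k (I, a).
Proof.
move=> [Hs Hocc] [h [Hb Ha]]; split; rewrite /tup /= -Ha; first by rewrite size_map.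
move=> v /mapP [x Hx ->]. have [t Ht Hxt] := Hocc _ Hx.
rewrite /adom /inst /=. apply/flatten_mapP. exists (t.1, map h t.2); first exact: Hb.
by apply: map_f.
Qed.

Lemma cod_le_of_contained k q p q'' : contained q p -> contained p q'' -> cod_le k q p q''.
Proof.
move=> Hqp Hpq e [Hw Hn]; split => // Hiff. apply: Hn; split; first exact: Hqp.
by move/Hpq/Hiff.
Qed.

Theorem corollary9 (k : nat) (q : CQ) (E : labeled) :
  wf_cq k q -> wf_labeled k E ->
  (exists q', candidate k q E q' /\ fits q' E /\ contained q q') ->
  (exists q', cod_generalization k q E q') /\
  (forall q1 q2, cod_generalization k q E q1 -> cod_generalization k q E q2 ->
     equivq q1 q2).
Proof.
move=> Hq [HEp HEn] [q' [[Hw' Hs'] [[Hfp Hfn] Hc']]].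
have Hsz : forall e, e \in pos E -> size (tup e) = k by move=> e /HEp [].
set p := prodE q (pos E).
have Hpsz : size (ans p) = k := prodE_size Hq.1 Hsz.
have Hqp : contained q p := prodE_contained Hq.1 Hsz.
have Hunivp : forall q'', fits q'' E -> contained q q'' -> contained p q''.
  by move=> q'' [Hp _] Hc; apply: (prodE_univ Hq.1 Hsz).
have Hpfits : fits p E.
  split; first exact: (prodE_den Hq.1 Hsz).
  move=> e He Hd. apply: (Hfn e He). by apply: (Hunivp q' (conj Hfp Hfn) Hc').
have Hpq' := Hunivp q' (conj Hfp Hfn) Hc'.
have Hpcand : candidate k q E p.
  split.
  - split => // x Hx.
    have [h [Hb Ha]] := Hpq' _ _ (canon p).
    rewrite -Ha in Hx. case/mapP: Hx => y Hy ->.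
    have [t Ht Hyt] := Hw'.2 _ Hy.
    exists (t.1, map h t.2); first exact: Hb. exact: map_f.
  - move=> a /sym_prodE [t0 H0 ->]. by rewrite mem_cat map_f.
have Hgen : cod_generalization k q E p.
  split => //; split => //; split => //.
  move=> [q'' [_ [Hf'' [Hc'' [_ Hn]]]]]. apply: Hn.
  exact: cod_le_of_contained (Hunivp _ Hf'' Hc'').
have Heq : forall q1, cod_generalization k q E q1 -> equivq q1 p.
  move=> q1 [[Hw1 _] [Hf1 [Hc1 Hmin]]].
  have Hp1 := Hunivp _ Hf1 Hc1.
  split => //.
  have Hle : cod_le k q q1 p.
    apply: NNPP => Hnle. apply: Hmin. exists p; split => //; split => //; split => //.
    split => //. exact: cod_le_of_contained.
  move=> I a Ha.
  case: (classic (den q (I, a))) => Hqa; first exact: Hqp.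
  have Hwf := answer_wf Hw1 Ha.
  have [_ Hn] := Hle (I, a) (conj Hwf (fun Hiff => Hqa (proj2 Hiff Ha))).
  apply: NNPP => Hnp. apply: Hn. apply: conj; move=> Hd; [by case: Hqa | by case: Hnp].
split; first by exists p.
move=> q1 q2 H1 H2. have [A B] := Heq _ H1. have [C D] := Heq _ H2.
split; [exact: contained_trans A D | exact: contained_trans C B].
Qed.
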